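(* Let $B$ be a blueprint and $\sim$ a congruence on $B$. Then the absorbing ideal $I_\sim=\{e\in B: eb\sim e\text{ for all }b\in B\}$ is an ideal of $B$. Moreover, $I_\sim$ is either empty or an equivalence class of $\sim$.
   Context: A monoid is a commutative semigroup $A$, written multiplicatively, with neutral element $1$. For a monoid $A$, $\mathbb N[A]$ denotes the semiring of finite formal sums $\sum a_i$ of elements $a_i\in A$ (repetitions allowed), with empty sum $\underline0$ and multiplication extended bilinearly from $A$. A pre-addition on $A$ is a relation $\mathcal R\subseteq\mathbb N[A]\times\mathbb N[A]$, written $\sum a_i\equiv\sum b_j$, which is an equivalence relation and satisfies: if $\sum a_i\equiv\sum b_j$ and $\sum c_k\equiv\sum d_l$, then $\sum a_i+\sum c_k\equiv\sum b_j+\sum d_l$ and $\sum_{i,k}a_ic_k\equiv\sum_{j,l}b_jd_l$. A blueprint $B=(A,\mathcal R)$ is a monoid $A$ with a pre-addition $\mathcal R$; we write $a\in B$ for $a\in A$. An element $e$ with $e\equiv\underline0$ is a zero of $B$. For an equivalence relation $\sim$ on $A$, its linear extension $\sim_{\mathbb N}$ is the equivalence relation on $\mathbb N[A]$ generated by $\sum_{i=1}^n a_i\sim_{\mathbb N}\sum_{i=1}^n b_i$ whenever $a_i\sim b_i$ for all $i$; and $\sim_{\mathcal R}$ is the smallest equivalence relation on $\mathbb N[A]$ containing both $\mathcal R$ and $\sim_{\mathbb N}$. A congruence on $B$ is an equivalence relation $\sim$ on $A$ such that (C1) $\sim_{\mathbb N}$ is a pre-addition on $A$, and (C2) the restriction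 of $\sim_{\mathcal R}$ to $A$ equals $\sim$. For a subset $I\subseteq B$, let $\sim^I$ be the equivalence relation on $A$ with $a\sim^I b$ iff $a=b$ or $a,b\in I$, and let $\sim_I$ be the relation on $A$ with $a\sim_I b$ iff there is a finite sequence $a\equiv\sum_k c_{1,k}\sim^I_{\mathbb N}\sum_k d_{1,k}\equiv\sum_k c_{2,k}\sim^I_{\mathbb N}\cdots\sim^I_{\mathbb N}\sum_k d_{n,k}\equiv b$ with $c_{i,k},d_{i,k}\in A$. An ideal of $B$ is a subset $I\subseteq B$ such that (I1) $ab\in I$ for all $a\in I$, $b\in B$; (I2) every zero of $B$ lies in $I$; (I3) if $a\sim_I b$ and $b\in I$, then $a\in I$. *)

(* Defs.v *)
(* Elements of N[A] (finite formal sums with repetition = finite multisets)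
   are represented by lists; a relation on N[A] is a relation on lists that
   is invariant under permutation (enforced in [preaddition]). *)
From Stdlib Require Import List Permutation Relations RelationClasses.
Import ListNotations.

Set Implicit Arguments.

Section Blue.
Variable A : Type.
Variable mul : A -> A -> A.
Variable one : A.

Definition is_cmonoid : Prop :=
  (forall a b c, mul a (mul b c) = mul (mul a b) c) /\
  (forall a b, mul a b = mul b a) /\
  (forall a, mul one a = a).

Definition lmul (s t : list A) : list A :=
  flat_map (fun a => map (mul a) t) s.

Definition preaddition (R : list A -> list A -> Prop) : Prop :=
  Equivalence R /\
  (forall s t, Permutation s t -> R s t) /\
  (forall s1 t1 s2 t2, R s1 t1 -> R s2 t2 -> R (s1 ++ s2) (t1 ++ t2)) /\
  (forall s1 t1 s2 t2, R s1 t1 -> R s2 t2 -> R (lmul s1 s2) (lmul t1 t2)).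

(* linear extension ~_N of a relation ~ on A: the equivalence relation on
   N[A] generated by sum a_i ~_N sum b_i when a_i ~ b_i (index-wise),
   sums being taken up to reordering *)
Definition linext (sim : A -> A -> Prop) : list A -> list A -> Prop :=
  clos_refl_sym_trans (list A)
    (fun s t => Forall2 sim s t \/ Permutation s t).

Definition simR (R : list A -> list A -> Prop) (sim : A -> A -> Prop)
  : list A -> list A -> Prop :=
  clos_refl_sym_trans (list A) (fun s t => R s t \/ linext sim s t).

Definition congruence (R : list A -> list A -> Prop) (sim : A -> A -> Prop)
  : Prop :=
  Equivalence sim /\
  preaddition (linext sim) /\
  (forall a b, simR R sim [a] [b] <-> sim a b).

Definition simUp (I : A -> Prop) (a b : A) : Prop := a = b \/ (I a /\ I b).

(* chains  s ≡ c1 ~^I_N d1 ≡ c2 ~^I_N ... ~^I_N dn ≡ t,  n >= 1 *)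
Inductive ichain (R : list A -> list A -> Prop) (I : A -> Prop)
  : list A -> list A -> Prop :=
| ichain_one : forall s c d t,
    R s c -> linext (simUp I) c d -> R d t -> ichain R I s t
| ichain_step : forall s c d t,
    R s c -> linext (simUp I) c d -> ichain R I d t -> ichain R I s t.

Definition simI (R : list A -> list A -> Prop) (I : A -> Prop) (a b : A)
  : Prop := ichain R I [a] [b].

Definition is_ideal (R : list A -> list A -> Prop) (I : A -> Prop) : Prop :=
  (forall a b, I a -> I (mul a b)) /\
  (forall e, R [e] [] -> I e) /\
  (forall a b, simI R I a b -> I b -> I a).

Definition absorbing (sim : A -> A -> Prop) (e : A) : Prop :=
  forall b, sim (mul e b) e.

End Blue.

(* Main.v *)
Require Import Defs.
From Stdlib Require Import List Permutation Relations RelationClasses.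
From Stdlib Require Import Classical.
Import ListNotations.

Lemma F2_mono (A : Type) (P Q : A -> A -> Prop) (H : forall x y, P x y -> Q x y) :
  forall s t, Forall2 P s t -> Forall2 Q s t.
Proof. induction 1; constructor; auto. Qed.

Lemma linext_mono (A : Type) (P Q : A -> A -> Prop) (H : forall x y, P x y -> Q x y) :
  forall s t, linext P s t -> linext Q s t.
Proof.
  unfold linext. induction 1.
  - apply rst_step. destruct H0; [left; eapply F2_mono; eauto | right; auto].
  - apply rst_refl.
  - apply rst_sym; auto.
  - eapply rst_trans; eauto.
Qed.

Theorem mainTheorem10 (A : Type) (mul : A -> A -> A) (one : A)
  (HA : is_cmonoid mul one)
  (R : list A -> list A -> Prop) (HR : preaddition mul R)
  (sim : A -> A -> Prop) (Hsim : congruence mul R sim) :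
  is_ideal mul R (absorbing mul sim) /\
  ((forall x, ~ absorbing mul sim x) \/
   (exists e, absorbing mul sim e /\
      forall x, absorbing mul sim x <-> sim x e)).
Proof.
  destruct HA as [Hass [Hcom Hone]].
  destruct Hsim as [Heq [[_ [_ [_ Hlm]]] Hiff]].
  destruct HR as [HReq [_ [_ HRm]]].
  assert (Hc : forall a b c, sim a b -> sim (mul a c) (mul b c)).
  { intros a b c Hab. apply Hiff. apply rst_step. right.
    change [mul a c] with (lmul mul [a] [c]).
    change [mul b c] with (lmul mul [b] [c]).
    apply Hlm.
    - apply rst_step. left. constructor; auto.
    - apply rst_refl. }
  assert (Hab : forall e f, absorbing mul sim e -> absorbing mul sim f -> sim e f).
  { intros e f He Hf. pose proof (He f). pose proof (Hf e). rewrite Hcom in H.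
    eapply (@Equivalence_Transitive _ _ Heq). apply (@Equivalence_Symmetric _ _ Heq). exact H. exact H0. }
  assert (Habs2 : forall e x, absorbing mul sim e -> sim x e -> absorbing mul sim x).
  { intros e x He Hx b. pose proof (Hc _ _ b Hx).
    eapply (@Equivalence_Transitive _ _ Heq). exact H.
    eapply (@Equivalence_Transitive _ _ Heq). apply He.
    apply (@Equivalence_Symmetric _ _ Heq). exact Hx. }
  split; [repeat split|].
  - intros a b Ha c. rewrite <- Hass.
    eapply (@Equivalence_Transitive _ _ Heq). apply Ha.
    apply (@Equivalence_Symmetric _ _ Heq). apply Ha.
  - intros e He b. apply Hiff.
    assert (R [mul e b] []).
    { change [mul e b] with (lmul mul [e] [b]). change (@nil A) with (lmul mul (@nil A) [b]).
      apply HRm; auto. apply (@Equivalence_Reflexive _ _ HReq). }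
    apply rst_step. left.
    eapply (@Equivalence_Transitive _ _ HReq). exact H.
    apply (@Equivalence_Symmetric _ _ HReq). exact He.
  - intros a b Hsab Hb.
    assert (Hl : forall s t, linext (simUp (absorbing mul sim)) s t -> linext sim s t).
    { apply linext_mono. intros x y [-> | [Hx Hy]].
      - apply (@Equivalence_Reflexive _ _ Heq).
      - apply Hab; auto. }
    assert (Hch : forall s t, ichain R (absorbing mul sim) s t -> simR R sim s t).
    { induction 1.
      - eapply rst_trans. apply rst_step; left; eauto.
        eapply rst_trans. apply rst_step; right; apply Hl; eauto.
        apply rst_step; left; eauto.
      - eapply rst_trans. apply rst_step; left; eauto.
        eapply rst_trans. apply rst_step; right; apply Hl; eauto.
        auto. }
    apply (Habs2 b a Hb). apply Hiff. apply Hch. exact Hsab.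
  - destruct (classic (exists e, absorbing mul sim e)) as [[e He]|Hn].
    + right. exists e. split; auto. intro x; split; intro H; [apply Hab; auto | eapply Habs2; eauto].
    + left. intros x Hx. apply Hn. eauto.
Qed.
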